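(* For all integers $r>0$, $d\ge 0$, $j\ge 0$, we have $\widetilde{A}_{r,d}(j) = A_{r,d}(j)$.
   Context: For integers $r>0$, $d\ge 0$, $j$: let $\Theta_{r,d}(j)$ be the set of tuples $\vec k=(k_1,\dots,k_l)\in\mathbb{Z}^l$ (with $l\ge 0$ arbitrary) such that $0\le k_i\le r$ for all $i$, $\sum_i k_i = rd$, and $\sum_i i\,k_i = j + rd(d+1)/2$; and set $\widetilde{A}_{r,d}(j)\coloneqq \sum_{\vec k\in\Theta_{r,d}(j)} \prod_{i=1}^l \binom{r}{k_i}$. For a Young diagram $Y$, $|Y|$ is its number of boxes and $c(Y)$ its number of columns; for an $r$-tuple $\vec Y=(Y_1,\dots,Y_r)$, $|\vec Y|=\sum_\alpha |Y_\alpha|$; for $\vec m=(m_1,\dots,m_r)\in\mathbb{Z}^r$, $(\vec m,\vec m)\coloneqq \frac{1}{2r}\sum_{\alpha,\beta=1}^r (m_\alpha-m_\beta)^2$. Then $A_{r,d}(j)$ is the number of $r$-tuples $(m_\alpha, Y_\alpha)_{\alpha=1}^r$ with $m_\alpha\in\mathbb{Z}_{\ge 0}$, $\sum_\alpha m_\alpha = rd$, each $Y_\alpha$ a Young diagram with $c(Y_\alpha)\le m_\alpha$, and $|\vec Y| + (\vec m,\vec m)/2 = j$. *)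

(* Defs.v *)
From mathcomp Require Import all_boot all_order all_algebra.
Set Implicit Arguments. Unset Strict Implicit. Unset Printing Implicit Defensive.
Import Order.TTheory GRing.Theory Num.Theory.

(* bseqs L B : every sequence of naturals of length <= L with entries <= B
   (used only as a finite ambient universe; all the objects counted below
   provably lie in it). *)
Fixpoint bseqs (L B : nat) : seq (seq nat) :=
  match L with
  | 0 => [:: [::]]
  | L'.+1 => [::] :: [seq x :: s | x <- iota 0 B.+1, s <- bseqs L' B]
  end.

Definition tri (r d : nat) : nat := (r * d * d.+1) %/ 2.

(* Theta_{r,d}(j): tuples (k_1,..,k_l), taken without trailing zeros
   (the last entry, if any, is nonzero). Index i in the paper = i.+1 here. *)
Definition in_Theta (r d j : nat) (k : seq nat) : bool :=
  [&& all (fun x => x <= r) k,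
      sumn k == r * d,
      \sum_(i < size k) i.+1 * nth 0 k i == j + tri r d
    & last 1 k != 0].

Definition Atilde (r d j : nat) : nat :=
  \sum_(k : seq_sub (bseqs (j + tri r d) r) | in_Theta r d j (val k))
     \prod_(x <- val k) 'C(r, x).

(* Young diagram, encoded by its row lengths (a partition). *)
Definition young (Y : seq nat) : bool := sorted geq Y && all (leq 1) Y.
Definition ysize (Y : seq nat) : nat := sumn Y.
Definition ncols (Y : seq nat) : nat := head 0 Y.

Definition mpair (r : nat) (m : 'I_r -> nat) : rat :=
  (((2 * r)%N%:R)^-1 * \sum_(a < r) \sum_(b < r) ((m a)%:R - (m b)%:R) ^+ 2)%R.

Definition A_pred (r d j : nat) (m : 'I_r -> nat) (Y : 'I_r -> seq nat) : bool :=
  [&& \sum_(a < r) m a == r * d,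
      [forall a, young (Y a) && (ncols (Y a) <= m a)]
    & ((\sum_(a < r) ysize (Y a))%N%:R + mpair m / 2%:R == j%:R :> rat)%R].

(* A_{r,d}(j): number of r-tuples (m_a, Y_a); m_a <= rd and |Y_a| <= j, so
   m ranges over 'I_(rd+1) and each Y_a over sequences of length <= j
   with entries <= j. *)
Definition A (r d j : nat) : nat :=
  #|[pred p : {ffun 'I_r -> 'I_(r * d).+1} * {ffun 'I_r -> seq_sub (bseqs j j)}
     | @A_pred r d j (fun a => val (p.1 a)) (fun a => val (p.2 a))]|.

(* Main.v *)
Require Import Defs.
From mathcomp Require Import all_boot all_order all_algebra.
From mathcomp Require Import zify ring lra.
Import Order.TTheory GRing.Theory Num.Theory.
Set Implicit Arguments. Unset Strict Implicit. Unset Printing Implicit Defensive.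

Definition btl (L B : nat) : seq (seq nat) :=
  if L is L'.+1 then [seq x :: s | x <- iota 0 B.+1, s <- bseqs L' B] else [::].
Lemma bseqsE L B : bseqs L B = [::] :: btl L B.
Proof. by case: L. Qed.
Lemma mem_btl L B x s : (x :: s \in btl L.+1 B) = (x <= B) && (s \in bseqs L B).
Proof.
apply/allpairsPdep/andP.
  by move=> [x' [s' [Hx Hs [-> ->]]]]; move: Hx; rewrite mem_iota add0n ltnS.
by move=> [Hx Hs]; exists x, s; split => //; rewrite mem_iota add0n ltnS.
Qed.
Lemma mem_bseqs L B s : (s \in bseqs L B) = (size s <= L) && all (fun x => x <= B) s.
Proof.
elim: L s => [|L IH] [|x s] //.
  by rewrite bseqsE in_cons /= mem_btl IH /= ltnS andbCA.
Qed.

Lemma uniq_bseqs L B : uniq (bseqs L B).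
Proof.
elim: L => [|L IH] //; rewrite bseqsE cons_uniq /btl allpairs_uniq ?iota_uniq //.
  rewrite andbT; apply/negP => /allpairsPdep [x [s [_ _ //]]].
by move=> [x1 s1] [x2 s2] _ _ [-> ->].
Qed.

Lemma sum_bseqsS (R : nmodType) L B (F : seq nat -> R) :
  (\sum_(s <- bseqs L.+1 B) F s = F [::] + \sum_(x < B.+1) \sum_(s <- bseqs L B) F ((x : nat) :: s))%R.
Proof.
by rewrite bseqsE big_cons /btl big_allpairs_dep -{1}(subn0 B.+1) -/(index_iota 0 B.+1) big_mkord.
Qed.

Lemma sum_seq_sub (R : nmodType) (s : seq (seq nat)) (P : pred (seq nat)) (F : seq nat -> R) :
  uniq s -> (\sum_(x : seq_sub s | P (val x)) F (val x) = \sum_(y <- s | P y) F y)%R.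
Proof.
move=> Us; have E : map val (enum {: seq_sub s}) = s.
  by rewrite enumT unlock val_seq_sub_enum.
rewrite -[in RHS]E big_map big_enum_cond.
by apply: eq_bigl => x; rewrite inE.
Qed.

Definition T a := 'C(a.+1, 2).
Arguments T : simpl never.
Lemma TS a : T a.+1 = T a + a.+1.
Proof. by rewrite /T binS bin1. Qed.
Lemma T0 : T 0 = 0. Proof. by []. Qed.
Lemma T2 a : T a * 2 = a * a.+1.
Proof. elim: a => [|a IH] //; rewrite TS mulnDl IH; lia. Qed.

Lemma young_cons x s : young (x :: s) = [&& 0 < x, ncols s <= x & young s].
Proof.
rewrite /young /=; case: s => [|y s] /=; first by rewrite andbT.
by case: (y <= x); case: (path geq y s); case: (0 < x).
Qed.

Definition Qg h B m : {poly int} :=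
  (\sum_(Y <- bseqs h B | young Y && (ncols Y <= m)%N) 'X^(ysize Y))%R.

Lemma Qg0 B m : Qg 0 B m = 1%R.
Proof. by rewrite /Qg /= big_cons big_nil /= addr0 expr0. Qed.

Lemma QgS h B m : Qg h.+1 B m =
  (1 + \sum_(x < B.+1 | (0 < x)%N && (x <= m)%N) 'X^x * Qg h B x)%R.
Proof.
rewrite /Qg big_mkcond sum_bseqsS /= expr0; congr (_ + _)%R.
rewrite [RHS]big_mkcond; apply: eq_bigr => x _ /=.
rewrite mulr_sumr; case: ifP => Hx.
  rewrite [RHS]big_mkcond.
  apply: eq_bigr => s _; rewrite young_cons /=.
  move/andP: Hx => [-> Hxm] /=; rewrite Hxm andbT.
  case: (boolP (ncols s <= x)) => Hs /=; last by rewrite andbF.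
  by case: (young s) => //=; rewrite exprD.
rewrite big1 // => s _; rewrite young_cons /=.
by move: Hx; case: (0 < x) => //=; case: (x <= m) => //; rewrite andbF.
Qed.

Lemma sum_filt_le (f : nat -> {poly int}) m B : m <= B ->
  (\sum_(x < B.+1 | (0 < x)%N && (x <= m)%N) f x = \sum_(x < m.+1 | (0 < x)%N) f x)%R.
Proof.
move=> HmB; have le : m.+1 <= B.+1 by [].
by rewrite (big_ord_narrow_cond (P := fun x : 'I_B.+1 => 0 < x) le).
Qed.

Lemma QgB h B m : m <= B -> Qg h B m = Qg h m m.
Proof.
elim: h B m => [|h IH] B m HmB; first by rewrite !Qg0.
rewrite !QgS (sum_filt_le (fun x => 'X^x * Qg h B x)%R) //.
rewrite (sum_filt_le (fun x => 'X^x * Qg h m x)%R) //; congr (_ + _)%R; apply: eq_bigr => x Hx.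
have Hxm : x <= m by rewrite -ltnS.
by rewrite IH ?(leq_trans Hxm) // [in RHS]IH.
Qed.

Lemma Qgh n h B m : n <= h -> ((Qg h.+1 B m)`_n = (Qg h B m)`_n)%R.
Proof.
elim: h n m => [|h IH] n m Hn.
  move: Hn; rewrite leqn0 => /eqP ->.
  rewrite QgS !Qg0 coefD coef_sum big1 ?addr0 // => x /andP [Hx _].
  by rewrite coefXnM Hx.
rewrite QgS [in RHS]QgS !coefD !coef_sum; congr (_ + _)%R.
apply: eq_bigr => x /andP [Hx _]; rewrite !coefXnM; case: ltnP => // Hxn.
by rewrite IH //; lia.
Qed.

Lemma QgBn n h B m : n <= B -> ((Qg h B.+1 m)`_n = (Qg h B m)`_n)%R.
Proof.
elim: h n m => [|h IH] n m Hn; first by rewrite !Qg0.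
rewrite !QgS !coefD; congr (_ + _)%R.
case: (leqP m B) => HmB.
  rewrite (sum_filt_le (fun x => 'X^x * Qg h B.+1 x)%R); last by apply: leqW.
  rewrite (sum_filt_le (fun x => 'X^x * Qg h B x)%R) //.
  rewrite !coef_sum; apply: eq_bigr => x _; rewrite !coefXnM; case: ltnP => // _.
  by rewrite IH //; lia.
rewrite [in LHS]big_mkcond big_ord_recr /= HmB coefD [X in (_ + X)%R]coefXnM.
have -> : (n < B.+1) by lia.
rewrite addr0 [in RHS]big_mkcond !coef_sum; apply: eq_bigr => x _ /=.
case: ifP => _; last by rewrite !coef0.
rewrite !coefXnM /=; case: ltnP => // _.
by rewrite IH //; lia.
Qed.

Definition Rr h m := Qg h m m.
Lemma Rr0 m : Rr 0 m = 1%R. Proof. exact: Qg0. Qed.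
Lemma Rr_0 h : Rr h 0 = 1%R.
Proof.
case: h => [|h]; first exact: Qg0.
by rewrite /Rr QgS big1 ?addr0 // => [[[|x] Hx]] //=.
Qed.
Lemma RrS h m : Rr h.+1 m.+1 = (Rr h.+1 m + 'X^(m.+1) * Rr h m.+1)%R.
Proof.
rewrite /Rr !QgS (sum_filt_le (fun x => 'X^x * Qg h m.+1 x)%R) //.
rewrite (sum_filt_le (fun x => 'X^x * Qg h m x)%R) //.
rewrite big_mkcond big_ord_recr /=.
have -> : (\sum_(i < m.+1) (if (0 < i)%N then 'X^i * Qg h m.+1 i else 0) =
   \sum_(x < m.+1 | (0 < x)%N) 'X^x * Qg h m x)%R.
  rewrite [RHS]big_mkcond; apply: eq_bigr => x _ /=.
  case: ifP => // _; rewrite QgB; last by apply: leqW; rewrite -ltnS.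
  by rewrite [in RHS]QgB // -ltnS.
by rewrite addrA.
Qed.

Local Open Scope ring_scope.

Notation PP := {poly {poly int}}.
Definition mono (a b : nat) : PP := ('X^b)%:P * 'X^a.

Lemma coef_mono1 a b i : (mono a b)`_i = 'X^b *+ (i == a).
Proof.
rewrite /mono coefMXn coefC; case: (ltngtP i a) => H.
- by rewrite mulr0n.
- by have -> : (i - a == 0)%N = false by apply/negP => /eqP; lia.
- by rewrite H subnn.
Qed.

Lemma coef_mono a b i k : (mono a b)`_i`_k = ((i == a) && (k == b))%:R.
Proof. by rewrite coef_mono1 coefMn coefXn; case: (i == a); case: (k == b). Qed.

Lemma mono_mul a b a' b' : mono a b * mono a' b' = mono (a + a') (b + b').
Proof. by rewrite /mono mulrACA -polyCM -!exprD. Qed.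

Lemma mono0 : mono 0 0 = 1.
Proof. by rewrite /mono !expr0 mulr1. Qed.

Lemma monoX a b n : mono a b ^+ n = mono (a * n) (b * n).
Proof.
elim: n => [|n IH]; first by rewrite expr0 !muln0 mono0.
by rewrite exprS IH mono_mul !mulnS.
Qed.

Definition xq : PP := mono 1 1.
Definition sig (p : PP) : PP := p \Po xq.

Lemma coef_sig p n : (sig p)`_n = p`_n * 'X^n.
Proof.
rewrite /sig comp_polyE.
have -> : \sum_(i < size p) p`_i *: xq ^+ i = \sum_(i < size p) (p`_i * 'X^i) *: 'X^i.
  apply: eq_bigr => i _; rewrite /xq monoX !mul1n /mono -!mul_polyC polyCM mulrA.
  by [].
rewrite coef_sum.
under eq_bigr do rewrite coefZ coefXn.
case: (ltnP n (size p)) => H.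
  rewrite (bigD1 (Ordinal H)) //= eqxx mulr1 big1 ?addr0 // => i /eqP Hi.
  case: eqP => [E|]; last by rewrite mulr0.
  by exfalso; apply: Hi; apply: val_inj; rewrite /= E.
rewrite nth_default // mul0r big1 // => i _.
case: eqP => [E|]; last by rewrite mulr0.
by move: (ltn_ord i); rewrite -E; lia.
Qed.

Lemma sigM p p' : sig (p * p') = sig p * sig p'.
Proof. exact: comp_polyM. Qed.
Lemma sigD p p' : sig (p + p') = sig p + sig p'.
Proof. exact: comp_polyD. Qed.
Lemma sig1 : sig 1 = 1.
Proof. exact: comp_polyC. Qed.
Lemma sigX p n : sig (p ^+ n) = sig p ^+ n.
Proof. by elim: n => [|n IH]; rewrite ?expr0 ?sig1 // !exprS sigM IH. Qed.
Lemma sig_mono a b : sig (mono a b) = mono a (b + a).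
Proof.
apply/polyP => i; rewrite coef_sig !coef_mono1; case: eqP => [->|_] //.
by rewrite exprD.
by rewrite !mulr0n mul0r.
Qed.

Lemma coef_xqM H n : (xq * H)`_n = if n == 0%N then 0 else 'X * H`_(n.-1).
Proof.
rewrite /xq /mono expr1 -mulrA coefCM coefXM.
by case: (n == 0%N); rewrite ?mulr0.
Qed.

Definition G L : PP := \poly_(a < L.+1) ('X^(T a) * Rr (L - a) a).

Lemma GS L : G L.+1 = (1 + xq) * sig (G L).
Proof.
apply/polyP => n; rewrite mulrDl mul1r coefD coef_xqM !coef_sig /G !coef_poly.
case: n => [|a] /=.
  by rewrite !subn0 !Rr_0 !expr0 !mulr1 addr0.
rewrite !subSS.
case: (ltngtP a L) => Ha.
- have -> : (a.+1 < L.+2)%N by lia.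
  have -> : (a.+1 < L.+1)%N by lia.
  have -> : (a < L.+1)%N by lia.
  have -> : (L - a = (L - a.+1).+1)%N by lia.
  rewrite RrS TS (exprD _ (T a)) !exprS; ring.
- have -> : (a.+1 < L.+2)%N = false by lia.
  have -> : (a.+1 < L.+1)%N = false by lia.
  have -> : (a < L.+1)%N = false by lia.
  by rewrite mul0r add0r mul0r mulr0.
- subst a; rewrite ltnSn ltnn mul0r add0r subnn !Rr0 TS (exprD _ (T L)) !exprS ltnSn; ring.
Qed.

Local Close Scope ring_scope.

Definition wsum (s : seq nat) : nat := \sum_(i < size s) i.+1 * nth 0 s i.

Lemma sumn_ord s : sumn s = \sum_(i < size s) nth 0 s i.
Proof. by rewrite sumnE (big_nth 0) big_mkord. Qed.

Lemma wsum_cons x s : wsum (x :: s) = x + wsum s + sumn s.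
Proof.
rewrite /wsum /= big_ord_recl /= mul1n -addnA; congr (_ + _).
rewrite sumn_ord -big_split /=; apply: eq_bigr => i _.
by rewrite /bump /= add1n mulSn addnC.
Qed.

Lemma wsum_nil : wsum [::] = 0. Proof. by rewrite /wsum big_ord0. Qed.

Local Open Scope ring_scope.

Definition F (r L : nat) : PP :=
  \sum_(s <- bseqs L r | last 1%N s != 0%N) mono (sumn s) (wsum s) *+ \prod_(x <- s) 'C(r, x).

Lemma F0 r : F r 0 = 1.
Proof. by rewrite /F /= big_cons big_nil /= big_nil addr0 wsum_nil mono0. Qed.

Lemma mem_btl_cons L B s : s \in btl L B -> exists x s', s = x :: s'.
Proof. by case: L => // L /allpairsPdep [x [s' [_ _ ->]]]; exists x, s'. Qed.

Lemma binom_xq r : (1 + xq) ^+ r = \sum_(x < r.+1) mono x x *+ 'C(r, x).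
Proof.
rewrite exprDn; apply: eq_bigr => x _.
by rewrite expr1n mul1r /xq monoX !mul1n.
Qed.

Lemma FS r L : F r L.+1 = (1 + xq) ^+ r * sig (F r L).
Proof.
pose t (x : nat) s := mono (x + sumn s) (wsum (x :: s)) *+ ('C(r, x) * \prod_(y <- s) 'C(r, y)).
have HR : (1 + xq) ^+ r * sig (F r L) =
    \sum_(x < r.+1) \sum_(s <- bseqs L r | last 1%N s != 0%N) t x s.
  rewrite binom_xq big_distrl; apply: eq_bigr => x _ /=.
  rewrite /F /sig linear_sum mulr_sumr; apply: eq_bigr => s _.
  rewrite raddfMn /= -/(sig _) sig_mono mulrnAl mulrnAr -mulrnA mono_mul /t wsum_cons.
  by rewrite mulnC addnA.
rewrite HR /F big_mkcond sum_bseqsS /= big_nil wsum_nil mono0 mulr1n.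
rewrite big_ord_recl [in RHS]big_ord_recl addrA; congr (_ + _).
  rewrite !bseqsE !big_cons /= !addrA; congr (_ + _).
    by rewrite /t /= addr0 wsum_cons wsum_nil big_nil bin0 mono0 mulr1n.
  rewrite [RHS]big_mkcond; apply: eq_big_seq => s /mem_btl_cons [y [s' ->]] /=.
  by rewrite /t /= big_cons.
apply: eq_bigr => x _; rewrite bseqsE !big_cons /=.
congr (_ + _).
rewrite [RHS]big_mkcond; apply: eq_big_seq => s /mem_btl_cons [y [s' ->]] /=.
by rewrite /t /= big_cons.
Qed.

Lemma G0 : G 0 = 1.
Proof.
apply/polyP => n; rewrite /G coef_poly coef1; case: n => [|n] //=.
by rewrite T0 expr0 Rr0 mulr1.
Qed.

Lemma FG r L : F r L = G L ^+ r.
Proof.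
elim: L => [|L IH]; first by rewrite F0 G0 expr1n.
by rewrite FS IH GS exprMn sigX.
Qed.

Lemma Atilde_coef r d j :
  ((Atilde r d j)%:R : int) = (F r (j + tri r d))`_(r * d)`_(j + tri r d).
Proof.
rewrite /Atilde natr_sum (sum_seq_sub (fun s => in_Theta r d j s)
  (fun s => (\prod_(x <- s) 'C(r, x))%:R)) ?uniq_bseqs //.
rewrite /F !coef_sum [RHS]big_mkcond big_mkcond /=.
rewrite [LHS]big_mkcond; apply: eq_big_seq => s; rewrite mem_bseqs => /andP [_ Hall].
rewrite /in_Theta Hall /= coefMn coefMn coef_mono -/(wsum s).
case: (last 1%N s != 0%N); last by rewrite !andbF.
rewrite !andbT [(r * d)%N == _]eq_sym [(j + tri r d)%N == _]eq_sym.
by case: (_ == _); case: (_ == _) => //=; rewrite ?mulr1n ?mul0rn.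
Qed.

Local Close Scope ring_scope.

Local Open Scope ring_scope.

Lemma sum_sq_diff r (x : 'I_r -> rat) :
  \sum_(a < r) \sum_(b < r) (x a - x b) ^+ 2 =
  2%:R * r%:R * \sum_(a < r) x a ^+ 2 - 2%:R * (\sum_(a < r) x a) ^+ 2.
Proof.
have E : forall a, \sum_(b < r) (x a - x b) ^+ 2 =
    x a ^+ 2 *+ r + \sum_(b < r) x b ^+ 2 - 2%:R * x a * \sum_(b < r) x b.
  move=> a; rewrite mulr_sumr.
  have -> : x a ^+ 2 *+ r = \sum_(b < r) x a ^+ 2 by rewrite sumr_const card_ord.
  rewrite -big_split -sumrB /=; apply: eq_bigr => b _; ring.
under eq_bigr do rewrite E.
rewrite sumrB big_split /= sumr_const card_ord -mulr_suml -mulr_sumr.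
rewrite sumrMnl; move: (\sum_(i < r) x i ^+ 2) (\sum_(i < r) x i) => s2 s1.
rewrite -(mulr_natr s2 r) expr2; ring.
Qed.

Lemma tri_T r d : tri r d = (r * T d)%N.
Proof. by rewrite /tri -mulnA -T2 mulnA mulnK. Qed.

Lemma rat_cond r d j (m : 'I_r -> nat) (S : nat) : (0 < r)%N ->
  (\sum_(a < r) m a = r * d)%N ->
  (S%:R + mpair m / 2%:R == j%:R :> rat) =
  (S + \sum_(a < r) T (m a) == j + tri r d)%N.
Proof.
move=> Hr Hsum.
set Q := (\sum_(a < r) m a ^ 2)%N.
have Hm : mpair m = Q%:R - (r * d * d)%:R.
  rewrite /mpair (sum_sq_diff (fun a => (m a)%:R)) -natr_sum Hsum /Q natr_sum.
  under [in RHS]eq_bigr do rewrite natrX.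
  move: (\sum_(a < r) (m a)%:R ^+ 2) => s2.
  have Hr0 : (r%:R : rat) != 0 by rewrite pnatr_eq0 -lt0n.
  rewrite !natrM; field; by rewrite Hr0.
have HT : ((\sum_(a < r) T (m a))%:R * 2%:R = Q%:R + (r * d)%:R :> rat).
  rewrite -natrM -natrD; congr (_%:R).
  rewrite big_distrl /= -Hsum /Q -big_split /=; apply: eq_bigr => a _.
  by rewrite T2; lia.
have Htri : ((tri r d)%:R * 2%:R = (r * d * d)%:R + (r * d)%:R :> rat).
  rewrite -natrM -natrD; congr (_%:R); rewrite tri_T -mulnA T2; lia.
rewrite -(eqr_nat rat) -subr_eq0 -[in RHS]subr_eq0 Hm; congr (_ == 0).
rewrite !natrD.
move: HT Htri; move: (Q%:R : rat) ((\sum_(a < r) T (m a))%:R : rat) ((tri r d)%:R : rat)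
  ((r * d * d)%:R : rat) ((r * d)%:R : rat) (S%:R : rat) (j%:R : rat).
move=> q t tr rdd rd s jj H1 H2.
lra.
Qed.

Definition Bs r d j : PP :=
  \sum_(m : 'I_(r * d).+1) \sum_(Y : seq_sub (bseqs j j))
     mono m (T m + ysize (val Y)) *+ (young (val Y) && (ncols (val Y) <= m)%N).

Lemma prod_mono (I : Type) (s : seq I) (f g c : I -> nat) :
  \prod_(i <- s) (mono (f i) (g i) *+ c i) =
  mono (\sum_(i <- s) f i) (\sum_(i <- s) g i) *+ (\prod_(i <- s) c i).
Proof.
elim: s => [|x s IH]; first by rewrite !big_nil mono0.
by rewrite !big_cons IH mulrnAl mulrnAr -mulrnA mono_mul mulnC.
Qed.

Lemma prod_bool r (b : 'I_r -> bool) : (\prod_(a < r) (b a : nat))%N = [forall a, b a].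
Proof.
case: (boolP [forall a, b a]) => [/forallP H | /forallPn [a Ha]].
  by rewrite big1 // => a _; rewrite H.
by rewrite (bigD1 a) //= (negbTE Ha) mul0n.
Qed.

Lemma A_coef r d j : (0 < r)%N ->
  ((A r d j)%:R : int) = (Bs r d j ^+ r)`_(r * d)`_(j + tri r d).
Proof.
move=> Hr.
have -> : Bs r d j ^+ r = \prod_(a < r) Bs r d j by rewrite prodr_const card_ord.
rewrite /Bs bigA_distr_bigA /=.
under eq_bigr do rewrite bigA_distr_bigA /=.
rewrite /A -sum1_card natr_sum big_mkcond /=.
rewrite (_ : \sum_(i : {ffun 'I_r -> 'I_(r * d).+1} * {ffun 'I_r -> seq_sub (bseqs j j)}) _ =
   \sum_(fm : {ffun 'I_r -> 'I_(r * d).+1}) \sum_(fY : {ffun 'I_r -> seq_sub (bseqs j j)})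
     (if A_pred d j (fun a => nat_of_ord (fm a)) (fun a => ssval (fY a)) then (1 : int) else 0)); last first.
  by rewrite pair_bigA; apply: eq_bigr => p _; rewrite inE.
rewrite !coef_sum; apply: eq_bigr => fm _; rewrite !coef_sum; apply: eq_bigr => fY _.
rewrite prod_mono coefMn coefMn coef_mono prod_bool /A_pred.
rewrite eq_sym [(j + tri r d)%N == _]eq_sym big_split /=.
case: (eqVneq (\sum_(a < r) fm a)%N (r * d)) => Hs.
  rewrite /= (rat_cond _ _ Hr Hs) addnC.
  by case: [forall a, _]; case: (_ == _).
by rewrite /= mul0rn.
Qed.

Local Close Scope ring_scope.

Local Open Scope ring_scope.

Definition Neg (D d : nat) (W : PP) (K : int) :=
  forall a b : nat, (a <= D)%N -> (b%:Z - (d * a)%:Z < K) -> W`_a`_b = 0.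


Lemma NegM D d U V K1 K2 : Neg D d U K1 -> Neg D d V K2 -> Neg D d (U * V) (K1 + K2).
Proof.
move=> HU HV a b Ha Hw; rewrite coefM coef_sum big1 // => i _.
rewrite coefM big1 // => k _.
have Hi : (i <= a)%N by rewrite -ltnS.
have Hk : (k <= b)%N by rewrite -ltnS.
case: (boolP ((k%:Z - (d * i)%:Z) < K1)) => H1.
  by rewrite HU ?mul0r //; apply: leq_trans Ha.
rewrite (HV (a - i)%N (b - k)%N) ?mulr0 //; first by apply: leq_trans (leq_subr _ _) Ha.
have Hdi : (d * i <= d * a)%N by rewrite leq_mul2l Hi orbT.
rewrite mulnBr; move: Hw H1; rewrite -leNgt.
move: (d * i)%N (d * a)%N Hdi => di da Hdi; lia.
Qed.

Lemma Neg1 D d : Neg D d 1 0.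
Proof.
move=> a b _ Hw; rewrite coef1; case: a Hw => [|a] Hw /=; last by rewrite coef0.
rewrite coef1; case: b Hw => [|b] //= Hw; by rewrite muln0 in Hw.
Qed.

Lemma NegD D d U V K : Neg D d U K -> Neg D d V K -> Neg D d (U + V) K.
Proof. by move=> HU HV a b Ha Hw; rewrite !coefD HU ?HV ?addr0. Qed.

Lemma NegB D d U V K : Neg D d U K -> Neg D d V K -> Neg D d (U - V) K.
Proof. by move=> HU HV a b Ha Hw; rewrite !coefB HU ?HV ?subr0. Qed.

Lemma Neg_le D d U K K' : K' <= K -> Neg D d U K -> Neg D d U K'.
Proof. move=> HK HU a b Ha Hw; apply: HU => //; exact: lt_le_trans Hw HK. Qed.

Lemma Neg_sum D d (I : Type) (s : seq I) (f : I -> PP) K :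
  (forall i, Neg D d (f i) K) -> Neg D d (\sum_(i <- s) f i) K.
Proof.
move=> H; elim: s => [|x s IH]; first by move=> a b _ _; rewrite big_nil coef0 coef0.
by rewrite big_cons; apply: NegD.
Qed.

Lemma NegX D d U K n : Neg D d U K -> Neg D d (U ^+ n) (n%:Z * K).
Proof.
move=> HU; elim: n => [|n IH]; first by rewrite expr0 mul0r; exact: Neg1.
rewrite exprS intS mulrDl mul1r; exact: NegM.
Qed.

Lemma T_ineq a d : (T d + d * a <= T a + d * d)%N.
Proof.
have Ha := T2 a; have Hd := T2 d; move: (T a) (T d) Ha Hd => ta td Ha Hd.
case: (leqP d a) => H.
  move: (subnK H) Ha => <-; move: (a - d)%N => k Ha; nia.
move: (ltnW H) => H'; move: (subnK H') Hd => <-; move: (d - a)%N => k Hd; nia.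
Qed.

Lemma T_ge n : (n <= T n)%N.
Proof. elim: n => [|n IH] //; rewrite TS; lia. Qed.

Lemma NegT D d (W : PP) :
  (forall a b : nat, (a <= D)%N -> (b < T a)%N -> W`_a`_b = 0) ->
  Neg D d W ((T d)%:Z - (d * d)%:Z).
Proof.
move=> H a b Ha Hw; apply: H => //.
move: (T_ineq a d) Hw; move: (T d) (T a) (d * a)%N (d * d)%N => td ta da dd; lia.
Qed.

Lemma sum_seq_sub' (R : nmodType) (s : seq (seq nat)) (F : seq nat -> R) :
  uniq s -> \sum_(x : seq_sub s) F (val x) = \sum_(y <- s) F y.
Proof. move=> Us; exact: (sum_seq_sub xpredT F Us). Qed.

Lemma coef_Bs r d j a : (a <= r * d)%N -> (Bs r d j)`_a = 'X^(T a) * Qg j j a.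
Proof.
move=> Ha; rewrite /Bs coef_sum.
have Ha' : (a < (r * d).+1)%N by [].
rewrite (bigD1 (Ordinal Ha')) //= [X in _ + X = _]big1 ?addr0; last first.
  move=> m /eqP Hm; rewrite coef_sum big1 // => Y _.
  rewrite coefMn coef_mono1.
  have -> : (a == m) = false by apply/negP => /eqP E; apply: Hm; apply: val_inj.
  by rewrite /= mulr0n mul0rn.
rewrite coef_sum (sum_seq_sub' (fun Y => (mono a (T a + ysize Y) *+ (young Y && (ncols Y <= a)%N))`_a)) ?uniq_bseqs //.
rewrite /Qg mulr_sumr [RHS]big_mkcond /=; apply: eq_bigr => Y _.
rewrite coefMn coef_mono1 eqxx mulr1n exprD.
by case: (_ && _).
Qed.

Lemma coef_G L a : (a <= L)%N -> (G L)`_a = 'X^(T a) * Rr (L - a) a.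
Proof. by move=> Ha; rewrite /G coef_poly ltnS Ha. Qed.

Lemma Qg_h_iter n h h' B m : (n <= h)%N -> (h <= h')%N -> (Qg h' B m)`_n = (Qg h B m)`_n.
Proof.
move=> Hn /subnK <-; elim: (h' - h)%N => [|k IH] //.
by rewrite addSn Qgh // (leq_trans Hn) // leq_addl.
Qed.

Lemma Qg_B_iter n h B B' m : (n <= B)%N -> (B <= B')%N -> (Qg h B' m)`_n = (Qg h B m)`_n.
Proof.
move=> Hn /subnK <-; elim: (B' - B)%N => [|k IH] //.
by rewrite addSn QgBn // (leq_trans Hn) // leq_addl.
Qed.

Lemma le_tri r d a : (a <= r * d)%N -> (a <= tri r d)%N.
Proof. by move=> Ha; rewrite tri_T (leq_trans Ha) // leq_mul2l T_ge orbT. Qed.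

Lemma stab r d j a n : (a <= r * d)%N -> (n <= j)%N ->
  (Rr (j + tri r d - a) a)`_n = (Qg j j a)`_n.
Proof.
move=> Ha Hn; have Ht := le_tri Ha.
rewrite /Rr (@Qg_h_iter n j (j + tri r d - a) a a) //; last by lia.
rewrite -(@Qg_B_iter n j j (j + a) a) //; last by rewrite leq_addr.
by rewrite QgB // leq_addl.
Qed.

Definition Bf r d j : PP := \poly_(a < (r * d).+1) (G (j + tri r d))`_a.

Lemma Neg_Bf r d j : Neg (r * d) d (Bf r d j) ((T d)%:Z - (d * d)%:Z).
Proof.
apply: NegT => a b Ha Hb.
have HaN : (a <= j + tri r d)%N by move: (le_tri Ha); lia.
by rewrite coef_poly ltnS Ha coef_G // coefXnM Hb.
Qed.

Lemma Neg_Bs r d j : Neg (r * d) d (Bs r d j) ((T d)%:Z - (d * d)%:Z).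
Proof. by apply: NegT => a b Ha Hb; rewrite coef_Bs // coefXnM Hb. Qed.

Lemma Neg_diff r d j :
  Neg (r * d) d (Bf r d j - Bs r d j) ((T d)%:Z - (d * d)%:Z + j%:Z + 1).
Proof.
move=> a b Ha Hw.
have HaN : (a <= j + tri r d)%N by move: (le_tri Ha); lia.
rewrite coefB coef_poly ltnS Ha coef_G // coef_Bs // -mulrBr coefXnM.
case: ltnP => // Hb; rewrite coefB stab ?subrr //.
move: (T_ineq a d) Hw Hb; move: (T d) (T a) (d * a)%N (d * d)%N => td ta da dd; lia.
Qed.

Local Close Scope ring_scope.

Theorem lemma5p3 (r d j : nat) : 0 < r -> Atilde r d j = A r d j.
Proof.
move=> Hr; apply/eqP; rewrite -(eqr_nat int) Atilde_coef A_coef // FG; apply/eqP.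
have E1 : ((G (j + tri r d) ^+ r)`_(r * d) = (Bf r d j ^+ r)`_(r * d))%R.
  apply/eqP; rewrite -GRing.subr_eq0 -coefB subrXX coefM big1 // => i _.
  have Hi : (i <= r * d)%N by rewrite -ltnS.
  by rewrite coefB /Bf [X in (_ - X)%R]coef_poly ltnS Hi GRing.subrr GRing.mul0r.
rewrite E1; apply/eqP; rewrite -GRing.subr_eq0 -coefB -coefB subrXX.
set c0 := ((T d)%:Z - (d * d)%:Z)%R.
have Hs : Neg (r * d) d (\sum_(i < r) Bf r d j ^+ (r.-1 - i) * Bs r d j ^+ i)%R
    ((r.-1)%:Z * c0)%R.
  apply: Neg_sum => i; apply: (@Neg_le _ _ _ ((r.-1 - i)%:Z * c0 + i%:Z * c0)%R).
    by rewrite -GRing.mulrDl -PoszD subnK // -ltnS prednK.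
  by apply: NegM; apply: NegX; [exact: Neg_Bf | exact: Neg_Bs].
apply/eqP; apply: (NegM (@Neg_diff r d j) Hs (a := r * d) (b := j + tri r d)) => //.
have Er : r = r.-1.+1 by rewrite prednK.
rewrite /c0 GRing.mulrBr -!PoszM tri_T.
have E2 : (r * T d = r.-1 * T d + T d)%N by rewrite {1}Er mulSn addnC.
have E3 : (d * (r * d) = r.-1 * (d * d) + d * d)%N by rewrite mulnCA {1}Er mulSn addnC.
rewrite E2 E3; move: (r.-1 * T d)%N (r.-1 * (d * d))%N (T d) (d * d)%N => x y td dd; lia.
Qed.
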